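(* Let $\mathcal{T}$ be an MPQ-tree of an interval graph $G=(V,E)$, and let $(x,y)\in E$ with $node(x)=node(y)=Q$ a Q-node with sections $S_1,\dots,S_k$ and child subtrees $T_1,\dots,T_k$. If either (1) $x$ and $y$ have more than one common section in $Q$ (i.e. $|\{i: x\in S_i \text{ and } y\in S_i\}|\ge 2$), or (2) for some common section $S_i$ of $x$ and $y$ the set $V_i$ does not induce a clique in $G$, then $(x,y)$ is not an interval edge.
   Context: Graphs are finite and simple; for $G=(V,E)$ and $e\in E$, $G-e=(V,E\setminus\{e\})$. An edge $(x,y)\in E$ of an interval graph $G$ is an interval edge if $G-(x,y)$ is an interval graph. An MPQ-tree of an interval graph $G=(V,E)$, $V=\{1,\dots,n\}$, is a rooted plane tree whose nodes are P-nodes and Q-nodes. Each P-node carries a (possibly empty) set of vertices. A Q-node has $k\ge 3$ ordered positions $1,\dots,k$; position $i$ carries a set $S_i\subseteq V$ (the $i$-th section) and a child subtree $T_i$, which may be empty. Every vertex $v$ is assigned to exactly one node $node(v)$: either $v$ lies in the set of the P-node $node(v)$, or $node(v)$ is a Q-node and $v$ lies exactly in the sections $S_{l(v)},\dots,S_{r(v)}$ of it, with $l(v)<r(v)$. For a node with child subtrees $T_1,\dots,T_k$, $V_i$ denotes the set of vertices assigned to nodes of $T_i$ ($V_i=\emptyset$ if $T_i$ is empty). The maximal cliques of $G$ are in bijection with the descending paths from the root which at a P-node continue into one of its children (stopping if there is none) and at a Q-node choose a position $i$ and continue into $T_i$ (stopping if $T_i$ is empty); the clique is the union of the sets of the visited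 P-nodes and the chosen sections. Reading these cliques left to right gives a linear order of the maximal cliques, and the orders obtained this way after arbitrarily permuting children of P-nodes and reversing the positions of Q-nodes are exactly the orders of the maximal cliques of $G$ in which the cliques containing any fixed vertex are consecutive. Moreover, for every Q-node with sections $S_1,\dots,S_k$: (a) $V_1\neq\emptyset$ and $V_k\ne\emptyset$; (b) $S_1\subseteq S_2$ and $S_k\subseteq S_{k-1}$; (c) $S_{i-1}\cap S_i\neq\emptyset$ for $2\le i\le k$; (d) $S_{i-1}\neq S_i$ for $2\le i\le k$; (e) $(S_i\cap S_{i+1})\setminus S_1\neq\emptyset$ and $(S_{i-1}\cap S_i)\setminus S_k\neq\emptyset$ for $2\le i\le k-1$; (f) $(S_{i-1}\cup V_{i-1})\setminus S_i\neq\emptyset$ and $(S_i\cup V_i)\setminus S_{i-1}\neq\emptyset$ for $2\le i\le k$; and further (g) no empty P-node has an empty P-node as its parent, (h) no P-node has exactly one child whose root is a P-node, (i) every child subtree of a P-node is nonempty. *)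

(* Defs.v *)
From HB Require Import structures.
From mathcomp Require Import all_boot all_order all_algebra.
From Stdlib Require List.
Set Implicit Arguments. Unset Strict Implicit. Unset Printing Implicit Defensive.
Import Order.TTheory GRing.Theory Num.Theory.

(* A finite simple graph on the finite vertex type T is a symmetric,
   irreflexive relation g : rel T. *)

Definition del_edge (T : finType) (g : rel T) (x y : T) : rel T :=
  fun u v => g u v && ~~ (((u == x) && (v == y)) || ((u == y) && (v == x))).

Definition interval_graph (T : finType) (g : rel T) : Prop :=
  exists (l r : T -> rat),
    (forall v, l v <= r v)%R /\
    (forall u v, u != v -> (g u v <-> (Num.max (l u) (l v) <= Num.min (r u) (r v))%R)).

Definition interval_edge (T : finType) (g : rel T) (x y : T) : Prop :=
  g x y /\ interval_graph (del_edge g x y).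

Definition is_clique (T : finType) (g : rel T) (K : {set T}) : Prop :=
  forall u v, u \in K -> v \in K -> u != v -> g u v.

Definition max_clique (T : finType) (g : rel T) (K : {set T}) : Prop :=
  is_clique g K /\ (forall K' : {set T}, K \subset K' -> is_clique g K' -> K' = K).

(* PNode Sv cs : P-node carrying the vertex set Sv with (nonempty) child
   subtrees cs (in plane order).
   QNode ss  : Q-node with positions 1..k; position i carries the section
   S_i = (nth i ss).1 and the child subtree (nth i ss).2 (None = empty). *)
Inductive mpq (T : finType) : Type :=
| PNode : {set T} -> seq (mpq T) -> mpq T
| QNode : seq ({set T} * option (mpq T)) -> mpq T.
Arguments PNode {T}.
Arguments QNode {T}.

Section MPQ.
Variable T : finType.

Fixpoint nodes (t : mpq T) : seq (mpq T) :=
  t :: match t with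
       | PNode _ cs => flatten (map nodes cs)
       | QNode ss => flatten (map (fun p => match p.2 with
                                           | Some c => nodes c
                                           | None => [::] end) ss)
       end.

Definition node_verts (t : mpq T) : {set T} :=
  match t with
  | PNode Sv _ => Sv
  | QNode ss => \bigcup_(p <- ss) p.1
  end.

Definition tree_verts (t : mpq T) : {set T} :=
  \bigcup_(nd <- nodes t) node_verts nd.
Definition otree_verts (o : option (mpq T)) : {set T} :=
  if o is Some t then tree_verts t else set0.

(* the cliques given by descending paths, read left to right *)
Fixpoint path_cliques (t : mpq T) : seq {set T} :=
  match t with
  | PNode Sv cs =>
      if cs is [::] then [:: Sv]
      else flatten (map (fun c => map (setU Sv) (path_cliques c)) cs)
  | QNode ss =>
      flatten (map (fun p => match p.2 with
                             | None => [:: p.1]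
                             | Some c => map (setU p.1) (path_cliques c) end) ss)
  end.

Fixpoint choices (A : Type) (L : seq (seq A)) : seq (seq A) :=
  if L is l :: L' then [seq a :: c | a <- l, c <- choices L'] else [:: [::]].

(* all clique orders obtained by permuting children of P-nodes and reversing
   Q-nodes, arbitrarily throughout the tree *)
Fixpoint tree_orders (t : mpq T) : seq (seq {set T}) :=
  match t with
  | PNode Sv cs =>
      if cs is [::] then [:: [:: Sv]]
      else let L := map tree_orders cs in
           [seq map (setU Sv) (flatten ch)
           | p <- permutations (iota 0 (size cs)),
             ch <- choices [seq nth [::] L i | i <- p]]
  | QNode ss =>
      let L := map (fun p => match p.2 with
                             | None => [:: [:: p.1]]
                             | Some c => map (map (setU p.1)) (tree_orders c) end) ss in
      [seq flatten ch | ch <- choices L] ++ [seq flatten (rev ch) | ch <- choices L]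
  end.

End MPQ.

Section MPQTree.
Variables (T : finType) (g : rel T).

Definition clique_order (L : seq {set T}) : Prop :=
  uniq L /\ (forall K, K \in L <-> max_clique g K).

Definition consecutive (L : seq {set T}) : Prop :=
  forall (v : T) (i j k : nat), i <= j -> j <= k -> k < size L ->
    v \in nth set0 L i -> v \in nth set0 L k -> v \in nth set0 L j.

Definition sec (ss : seq ({set T} * option (mpq T))) (i : nat) : {set T} :=
  (nth (set0, None) ss i).1.
Definition sub (ss : seq ({set T} * option (mpq T))) (i : nat) : {set T} :=
  otree_verts (nth (set0, None) ss i).2.

(* conditions on a single Q-node with positions 0..k-1 (paper: 1..k) *)
Definition Qnode_ok (ss : seq ({set T} * option (mpq T))) : Prop :=
  let k := size ss in
  3 <= k /\
      (forall v, v \in node_verts (QNode ss) ->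
         exists l r, l < r < k /\ forall i, i < k -> (v \in sec ss i) = (l <= i <= r)) /\
      (sub ss 0 != set0 /\ sub ss k.-1 != set0) /\
      (sec ss 0 \subset sec ss 1 /\ sec ss k.-1 \subset sec ss k.-2) /\
      (forall i, 0 < i < k ->
          sec ss i.-1 :&: sec ss i != set0 /\ sec ss i.-1 != sec ss i) /\
      (forall i, 0 < i < k.-1 ->
          (sec ss i :&: sec ss i.+1) :\: sec ss 0 != set0 /\
          (sec ss i.-1 :&: sec ss i) :\: sec ss k.-1 != set0) /\
      (forall i, 0 < i < k ->
          (sec ss i.-1 :|: sub ss i.-1) :\: sec ss i != set0 /\
          (sec ss i :|: sub ss i) :\: sec ss i.-1 != set0).

(* conditions (g),(h) on a single P-node; (i) holds by construction *)
Definition Pnode_ok (Sv : {set T}) (cs : seq (mpq T)) : Prop :=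
  (Sv = set0 -> forall c, List.In c cs -> forall cs', c <> PNode set0 cs') /\
  (forall S' cs', cs <> [:: PNode S' cs']).

Definition MPQ_tree (t : mpq T) : Prop :=
  [/\
      (forall v, count (fun nd => v \in node_verts nd) (nodes t) = 1),
      uniq (path_cliques t) /\ (forall K, K \in path_cliques t <-> max_clique g K),
      (forall L, L \in tree_orders t <-> clique_order L /\ consecutive L),
      (forall ss, List.In (QNode ss) (nodes t) -> Qnode_ok ss) &
      (forall Sv cs, List.In (PNode Sv cs) (nodes t) -> Pnode_ok Sv cs)].

End MPQTree.

(* Main.v *)
Require Import Defs.
From HB Require Import structures.
From mathcomp Require Import all_boot all_order all_algebra.
From mathcomp Require Import lra.
From Stdlib Require Import Classical.
Import Order.TTheory GRing.Theory Num.Theory.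
Set Implicit Arguments. Unset Strict Implicit. Unset Printing Implicit Defensive.

Lemma c4_free (T : finType) (h : rel T) (a b x y : T) :
  interval_graph h -> h a x -> h x b -> h b y -> h y a -> ~~ h a b -> ~~ h x y ->
  a != b -> x != y -> a != x -> x != b -> b != y -> y != a -> False.
Proof.
case=> l [r [lr H]] hax hxb hby hya nab nxy dab dxy dax dxb dby dya.
have E u v : u != v -> h u v = ((l u <= r v) && (l v <= r u))%R.
  move=> d; apply/idP/idP.
    move/(H u v d); rewrite ge_max !le_min.
    by case/andP=> /andP[_ ->] /andP[-> _].
  move=> /andP[h1 h2]; apply/(H u v d).
  by rewrite ge_max !le_min lr h1 h2 lr.
move: hax hxb hby hya nab nxy.
rewrite (E _ _ dab) (E _ _ dxy) (E _ _ dax) (E _ _ dxb) (E _ _ dby) (E _ _ dya).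
move=> /andP[h1 h2] /andP[h3 h4] /andP[h5 h6] /andP[h7 h8].
rewrite !negb_and -!ltNge => /orP[] hab /orP[] hxy; lra.
Qed.
Section Tree.
Variable T : finType.

Definition mpq_ind' (P : mpq T -> Prop)
 (HP : forall Sv cs, (forall c, List.In c cs -> P c) -> P (PNode Sv cs))
 (HQ : forall ss, (forall p c, List.In p ss -> p.2 = Some c -> P c) -> P (QNode ss)) :
 forall t, P t :=
 fix F t := match t with
 | PNode Sv cs => HP Sv cs
    ((fix G (l : seq (mpq T)) : forall c, List.In c l -> P c :=
       match l with
       | [::] => fun c H => False_ind _ H
       | c0 :: l' => fun c H => match H with
                   | or_introl E => eq_ind c0 P (F c0) c E
                   | or_intror H' => G l' c H' end
       end) cs)
 | QNode ss => HQ ss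
    ((fix G (l : seq ({set T} * option (mpq T))) :
        forall p c, List.In p l -> p.2 = Some c -> P c :=
       match l with
       | [::] => fun p c H _ => False_ind _ H
       | (S0, o0) :: l' => fun p c H E => match H with
           | or_introl E0 =>
              (match o0 as o return o = Some c -> P c with
               | Some c0 => fun E3 => eq_ind c0 P (F c0) c
                     (f_equal (fun o => match o with Some z => z | None => c0 end) E3)
               | None => fun E3 => False_ind _
                  (match E3 in _ = o return (match o with Some _ => False | None => True end)
                   with erefl => I end)
               end) (eq_trans (f_equal snd E0) E)
           | or_intror H' => G l' p c H' E end
       end) ss)
 end.

Lemma In_cat (A : Type) (x : A) s1 s2 : List.In x (s1 ++ s2) <-> List.In x s1 \/ List.In x s2.
Proof. elim: s1 => [|a s1 IH] /=; [tauto|rewrite IH; tauto]. Qed.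

Lemma In_flatten_map (A B : Type) (f : A -> seq B) (y : B) s :
  List.In y (flatten (map f s)) <-> exists x, List.In x s /\ List.In y (f x).
Proof.
elim: s => [|a s IH] /=; first by split=> [[]|[x []]].
rewrite In_cat IH; split.
  by case=> [H|[x [H1 H2]]]; [exists a | exists x]; tauto.
by case=> x [[<-|H1] H2]; [left|right; exists x].
Qed.

Lemma mem_flatten_In (A : Type) (B : eqType) (f : A -> seq B) (y : B) (a : A) s :
  List.In a s -> y \in f a -> y \in flatten (map f s).
Proof.
elim: s => [|b s IH] //= [<-|H] Hy; rewrite mem_cat ?Hy //.
by rewrite IH ?orbT.
Qed.

Lemma flatten_map_mem (A : Type) (B : eqType) (f : A -> seq B) (y : B) s :
  y \in flatten (map f s) -> exists a, List.In a s /\ y \in f a.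
Proof.
elim: s => [|b s IH] //=; rewrite mem_cat => /orP[H|/IH[a [H1 H2]]].
  by exists b; split=> //; left.
by exists a; split=> //; right.
Qed.

Lemma In_nth (A : Type) (d x : A) s : List.In x s -> exists2 i, i < size s & nth d s i = x.
Proof.
elim: s => [|a s IH] //= [<-|/IH[i Hi <-]]; first by exists 0.
by exists i.+1.
Qed.

Lemma nth_In (A : Type) (d : A) s i : i < size s -> List.In (nth d s i) s.
Proof. elim: s i => [|a s IH] [|i] //= H; [left|right; apply: IH]; done. Qed.

Lemma bigcup_In (A : Type) (F : A -> {set T}) (v : T) s :
  v \in \bigcup_(a <- s) F a <-> exists a, List.In a s /\ v \in F a.
Proof.
elim: s => [|a s IH]; first by rewrite big_nil in_set0; split=> // [[x []]].
rewrite big_cons in_setU; split.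
  case/orP=> [H|/IH [x [H1 H2]]]; [by exists a; split=> //; left|by exists x; split=> //; right].
by case=> x [[<-|H1] H2]; [rewrite H2|apply/orP; right; apply/IH; exists x].
Qed.

Lemma bigcup_count (A : Type) (F : A -> {set T}) (v : T) s :
  (v \in \bigcup_(a <- s) F a) = (0 < count (fun a => v \in F a) s).
Proof.
elim: s => [|a s IH]; first by rewrite big_nil in_set0.
by rewrite big_cons in_setU IH /=; case: (v \in F a).
Qed.

Lemma count_In (A : Type) (p : pred A) a s : List.In a s -> p a -> 0 < count p s.
Proof.
elim: s => [|b s IH] //= [<-|H] Hp; first by rewrite Hp.
by rewrite addnC ltn_addr // IH.
Qed.

Lemma count_flatten_le (A B : Type) (f : A -> seq B) (p : pred B) s a :
  List.In a s -> count p (f a) <= count p (flatten (map f s)).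
Proof.
elim: s => [|b s IH] //= [<-|H]; rewrite count_cat ?leq_addr //.
by rewrite (leq_trans (IH H)) // leq_addl.
Qed.

Lemma count_flatten_two (A B : Type) (f : A -> seq B) (p : pred B) s d i j :
  i < j < size s -> count p (f (nth d s i)) + count p (f (nth d s j)) <= count p (flatten (map f s)).
Proof.
elim: s i j => [|b s IH] [|i] [|j] //=; rewrite ?count_cat.
- by case/andP.
- move=> H; rewrite leq_add2l; apply: count_flatten_le; apply: nth_In; done.
- by move=> H; rewrite (leq_trans (IH _ _ H)) // leq_addl.
Qed.



Definition ochn (o : option (mpq T)) : seq (mpq T) :=
  match o with Some c => nodes c | None => [::] end.

Lemma nodesP (Sv : {set T}) cs : nodes (PNode Sv cs) = PNode Sv cs :: flatten (map (@nodes T) cs).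
Proof. by []. Qed.
Lemma nodesQ (ss : seq ({set T} * option (mpq T))) : nodes (QNode ss) = QNode ss :: flatten (map (fun p => ochn p.2) ss).
Proof. by []. Qed.

Lemma pcP (Sv : {set T}) c0 cs : path_cliques (PNode Sv (c0 :: cs)) =
  flatten (map (fun c => map (setU Sv) (path_cliques c)) (c0 :: cs)).
Proof. by []. Qed.
Lemma pcQ (ss : seq ({set T} * option (mpq T))) : path_cliques (QNode ss) =
  flatten (map (fun p => match p.2 with
                             | None => [:: p.1]
                             | Some c => map (setU p.1) (path_cliques c) end) ss).
Proof. by []. Qed.

Definition cnt (v : T) := fun nd : mpq T => v \in node_verts nd.

Lemma tv_count (v : T) (c : mpq T) : (v \in tree_verts c) = (0 < count (cnt v) (nodes c)).
Proof. exact: bigcup_count. Qed.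

Lemma otv_count (v : T) (o : option (mpq T)) : (v \in otree_verts o) = (0 < count (cnt v) (ochn o)).
Proof. by case: o => [c|] /=; rewrite ?tv_count ?in_set0. Qed.

Lemma nv_tv (v : T) (c : mpq T) : v \in node_verts c -> v \in tree_verts c.
Proof. by rewrite tv_count => H; case: c H => [Sv cs|ss] H; rewrite /= {1}/cnt /= H. Qed.

Lemma child_In_P (Sv : {set T}) cs (c : mpq T) : List.In c cs -> List.In c (nodes (PNode Sv cs)).
Proof.
move=> H; rewrite nodesP; right; apply/In_flatten_map; exists c; split=> //.
by case: c {H} => *; left.
Qed.

Lemma child_In_Q (ss : seq ({set T} * option (mpq T))) p (c : mpq T) : List.In p ss -> p.2 = Some c -> List.In c (nodes (QNode ss)).
Proof.
move=> H E; rewrite nodesQ; right; apply/In_flatten_map; exists p; split=> //.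
by rewrite E /=; case: c {E} => *; left.
Qed.

Lemma nodes_trans (t s nd : mpq T) : List.In s (nodes t) -> List.In nd (nodes s) -> List.In nd (nodes t).
Proof.
elim/mpq_ind': t => [Sv cs IH|ss IH].
  rewrite nodesP => -[<- //|/In_flatten_map [c [Hc Hs]]] Hnd.
  right; apply/In_flatten_map; exists c; split=> //; exact: IH.
rewrite nodesQ => -[<- //|/In_flatten_map [p [Hp Hs]]] Hnd.
right; apply/In_flatten_map; exists p; split=> //.
move: Hs; rewrite /ochn; case E: p.2 => [c|] // Hs; exact: (IH p c).
Qed.

Lemma count_sub (t s : mpq T) (q : pred (mpq T)) : List.In s (nodes t) -> count q (nodes s) <= count q (nodes t).
Proof.
elim/mpq_ind': t => [Sv cs IH|ss IH].
  rewrite nodesP => -[<- //|/In_flatten_map [c [Hc Hs]]].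
  rewrite /= (leq_trans (IH c Hc Hs)) // (leq_trans (count_flatten_le _ _ Hc)) //.
  exact: leq_addl.
rewrite nodesQ => -[<- //|/In_flatten_map [p [Hp Hs]]].
move: Hs; rewrite /ochn; case E: p.2 => [c|] // Hs.
rewrite /= (leq_trans (IH p c Hp E Hs)) //.
have := count_flatten_le (fun p => ochn p.2) q Hp; rewrite /ochn E => H.
exact: (leq_trans H (leq_addl _ _)).
Qed.

Lemma tv_sub (t s : mpq T) (v : T) : List.In s (nodes t) -> v \in tree_verts s -> v \in tree_verts t.
Proof. by rewrite !tv_count => H1 H2; apply: (leq_trans H2); apply: count_sub. Qed.

Lemma pc_sub (t : mpq T) K (v : T) : K \in path_cliques t -> v \in K -> v \in tree_verts t.
Proof.
elim/mpq_ind': t K => [Sv cs IH|ss IH] K.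
  case: cs IH => [|c0 cs'] IH; rewrite ?pcP.
    by rewrite /= inE => /eqP-> Hv; apply: nv_tv.
  move=> /flatten_map_mem [c [Hc /mapP[K'' HK'' ->]]].
  rewrite in_setU => /orP[Hv|Hv]; first by apply: nv_tv.
  apply: (tv_sub (child_In_P Sv Hc)); exact: (IH c Hc K'').
rewrite pcQ => /flatten_map_mem [[S0 o] [Hp]] /=.
have HS : forall v, v \in S0 -> v \in tree_verts (QNode ss).
  by move=> w Hw; apply: nv_tv => /=; apply/bigcup_In; exists (S0, o).
case: o Hp => [c|] Hp.
  move=> /mapP[K'' HK'' ->]; rewrite in_setU => /orP[/HS //|Hv].
  apply: (tv_sub (child_In_Q Hp (erefl _))); exact: (IH _ c Hp (erefl _) K'').
by rewrite inE => /eqP-> /HS.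
Qed.



Lemma memP (Sv : {set T}) cs c K : List.In c cs -> K \in path_cliques c ->
  Sv :|: K \in path_cliques (PNode Sv cs).
Proof.
case: cs => [//|c0 cs'] Hc HK; rewrite pcP.
apply: (mem_flatten_In (f := fun c => map (setU Sv) (path_cliques c)) Hc); exact: map_f.
Qed.

Lemma memQ (ss : seq ({set T} * option (mpq T))) p c K : List.In p ss -> p.2 = Some c ->
  K \in path_cliques c -> p.1 :|: K \in path_cliques (QNode ss).
Proof.
move=> Hp E HK; rewrite pcQ.
apply: (mem_flatten_In (f := fun p => match p.2 with
     | None => [:: p.1] | Some c => map (setU p.1) (path_cliques c) end) Hp).
by rewrite E; exact: map_f.
Qed.

Lemma memQ0 (ss : seq ({set T} * option (mpq T))) p : List.In p ss -> p.2 = None ->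
  p.1 \in path_cliques (QNode ss).
Proof.
move=> Hp E; rewrite pcQ.
apply: (mem_flatten_In (f := fun p => match p.2 with
     | None => [:: p.1] | Some c => map (setU p.1) (path_cliques c) end) Hp).
by rewrite E inE.
Qed.

Lemma pc_lift (t s : mpq T) K : List.In s (nodes t) -> K \in path_cliques s ->
  exists K', K' \in path_cliques t /\ K \subset K'.
Proof.
elim/mpq_ind': t => [Sv cs IH|ss IH].
  rewrite nodesP => -[<- HK|/In_flatten_map [c [Hc Hs]] HK]; first by exists K.
  have [K' [HK' sub]] := IH c Hc Hs HK.
  exists (Sv :|: K'); split; last by rewrite (subset_trans sub) // subsetUr.
  exact: memP Hc HK'.
rewrite nodesQ => -[<- HK|/In_flatten_map [p [Hp Hs]] HK]; first by exists K.
move: Hs; rewrite /ochn; case E: p.2 => [c|] // Hs.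
have [K' [HK' sub]] := IH p c Hp E Hs HK.
exists (p.1 :|: K'); split; last by rewrite (subset_trans sub) // subsetUr.
exact: memQ Hp E HK'.
Qed.

Definition Qne (c : mpq T) := forall ss, List.In (QNode ss) (nodes c) -> ss <> [::].

Lemma Qne_child (t s : mpq T) : Qne t -> List.In s (nodes t) -> Qne s.
Proof. move=> H Hs ss Hss; apply: H; exact: nodes_trans Hs Hss. Qed.

Lemma pc_ne (c : mpq T) : Qne c -> exists K, K \in path_cliques c.
Proof.
elim/mpq_ind': c => [Sv cs IH|ss IH] Hne.
  case: cs IH Hne => [|c0 cs'] IH Hne; first by exists Sv; rewrite /= inE.
  have Hc0 : List.In c0 (c0 :: cs') by left.
  have [K HK] := IH c0 Hc0 (Qne_child Hne (child_In_P Sv Hc0)).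
  exists (Sv :|: K); exact: memP Hc0 HK.
case: ss IH Hne => [|[S0 o] ss'] IH Hne; first by exfalso; apply: (Hne [::]) => //; left.
have Hp : List.In (S0, o) ((S0, o) :: ss') by left.
case: o IH Hp Hne => [c|] IH Hp Hne.
  have [K HK] := IH _ c Hp erefl (Qne_child Hne (child_In_Q Hp erefl)).
  exists (S0 :|: K); exact: (memQ Hp erefl HK).
exists S0; exact: (memQ0 Hp erefl).
Qed.

Lemma count_flatten_pos (A B : Type) (f : A -> seq B) (q : pred B) s :
  0 < count q (flatten (map f s)) -> exists a, List.In a s /\ 0 < count q (f a).
Proof.
elim: s => [|b s IH] //=; rewrite count_cat.
case H: (count q (f b)) => [|n] /=.
  by move/IH=> [a [H1 H2]]; exists a; split=> //; right.
by move=> _; exists b; split; [left|rewrite H].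
Qed.

Lemma pc_cover (c : mpq T) v : Qne c -> v \in tree_verts c ->
  exists K, K \in path_cliques c /\ v \in K.
Proof.
elim/mpq_ind': c => [Sv cs IH|ss IH] Hne.
  rewrite tv_count nodesP /= {1}/cnt /=.
  case Hv: (v \in Sv) => /= H.
    case: cs IH Hne {H} => [|c0 cs'] IH Hne; first by exists Sv; rewrite /= inE.
    have Hc0 : List.In c0 (c0 :: cs') by left.
    have [K HK] := pc_ne (Qne_child Hne (child_In_P Sv Hc0)).
    exists (Sv :|: K); rewrite in_setU Hv; split=> //; exact: memP Hc0 HK.
  move: H; rewrite add0n => /count_flatten_pos [c [Hc Hcnt]].
  rewrite -tv_count in Hcnt.
  have [K [HK Hv']] := IH c Hc (Qne_child Hne (child_In_P Sv Hc)) Hcnt.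
  exists (Sv :|: K); rewrite in_setU Hv' orbT; split=> //; exact: memP Hc HK.
rewrite tv_count nodesQ /= {1}/cnt /=.
case Hv: (v \in node_verts (QNode ss)) => /= H.
  move: Hv => /= /bigcup_In [[S0 o] [Hp Hv]].
  case: o Hp Hv => [c|] Hp Hv /=.
    have [K HK] := pc_ne (Qne_child Hne (child_In_Q Hp erefl)).
    exists (S0 :|: K); rewrite in_setU Hv; split=> //; exact: (memQ Hp erefl HK).
  by exists S0; split=> //; exact: (memQ0 Hp erefl).
move: H; rewrite add0n => /count_flatten_pos [[S0 o] [Hp Hcnt]].
case: o Hp Hcnt => [c|] Hp Hcnt //=.
rewrite /= -tv_count in Hcnt.
have [K [HK Hv']] := IH _ c Hp erefl (Qne_child Hne (child_In_Q Hp erefl)) Hcnt.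
exists (S0 :|: K); rewrite in_setU Hv' orbT; split=> //; exact: (memQ Hp erefl HK).
Qed.



Lemma G1lt (A B : Type) (h : A -> seq B) (q : pred B) l d i j :
  count q (flatten (map h l)) <= 1 -> i < j -> j < size l ->
  0 < count q (h (nth d l i)) -> 0 < count q (h (nth d l j)) -> False.
Proof.
move=> H lt Hj Ci Cj.
have := @count_flatten_two A B h q l d i j; rewrite lt Hj => /(_ isT) H2.
have := leq_trans H2 H; rewrite -(prednK Ci) -(prednK Cj) /=.
by rewrite addSn ltnS addnS.
Qed.

Lemma G1 (A B : Type) (h : A -> seq B) (q : pred B) l d i j :
  count q (flatten (map h l)) <= 1 -> i != j -> i < size l -> j < size l ->
  0 < count q (h (nth d l i)) -> 0 < count q (h (nth d l j)) -> False.
Proof.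
move=> H ne Hi Hj Ci Cj.
case: (ltngtP i j) ne => [lt|lt|E] ne //.
  exact: (G1lt H lt Hj Ci Cj).
exact: (G1lt H lt Hi Cj Ci).
Qed.

Lemma G2 (A B : Type) (h : A -> seq B) (q : pred B) l (bb : bool) a :
  bb + count q (flatten (map h l)) <= 1 -> bb -> List.In a l -> 0 < count q (h a) -> False.
Proof.
move=> H Hb Ha Hc; move: (leq_trans Hc (count_flatten_le h q Ha)) => C.
by move: H; rewrite Hb -(prednK C).
Qed.

Lemma pc_Q (t : mpq T) (ss : seq ({set T} * option (mpq T))) K a b :
  (forall v, count (cnt v) (nodes t) <= 1) ->
  List.In (QNode ss) (nodes t) -> K \in path_cliques t ->
  a \in K -> b \in K -> a \in tree_verts (QNode ss) -> b \in tree_verts (QNode ss) ->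
  exists2 j, j < size ss & (a \in sec ss j :|: sub ss j) && (b \in sec ss j :|: sub ss j).
Proof.
elim/mpq_ind': t K => [Sv cs IH|ss0 IH] K Hcnt.
  rewrite nodesP => -[//|/In_flatten_map [c' [Hc' Hs]]].
  case: cs IH Hcnt Hc' => [//|c0 cs'] IH Hcnt Hc'.
  rewrite pcP => /flatten_map_mem [c [Hc /mapP[K'' HK'' ->]]].
  move=> Ha Hb Qa Qb.
  have Ta := tv_sub Hs Qa; have Tb := tv_sub Hs Qb.
  have [i Hi Ei] := In_nth c Hc; have [j Hj Ej] := In_nth c Hc'.
  have nS v : v \in Sv -> v \in tree_verts c' -> False.
    move=> H1 H2; apply: (G2 (h := @nodes T) (Hcnt v) _ Hc').
      by rewrite /cnt /= H1.
    by rewrite -tv_count.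
  case: (eqVneq i j) => [Eij|nij].
    have Ecc : c' = c by rewrite -Ej -Eij Ei.
    rewrite Ecc in Hs.
    have Hcnt' v : count (cnt v) (nodes c) <= 1.
      exact: leq_trans (count_sub _ (child_In_P Sv Hc)) (Hcnt v).
    move: Ha Hb; rewrite !in_setU => /orP[/nS/(_ Ta)//|Ha] /orP[/nS/(_ Tb)//|Hb].
    exact: (IH c Hc K'' Hcnt' Hs HK'' Ha Hb Qa Qb).
  exfalso; move: Ha; rewrite in_setU => /orP[/nS/(_ Ta)//|Ha].
  have Tc := pc_sub HK'' Ha.
  have Hc3 : count (cnt a) (flatten (map (@nodes T) (c0::cs'))) <= 1 :=
    leq_trans (leq_addl (cnt a (PNode Sv (c0::cs'))) _) (Hcnt a).
  apply: (G1 (d := c) Hc3 nij Hi Hj); rewrite ?Ei ?Ej -tv_count //.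
rewrite nodesQ => HQ.
rewrite pcQ => /flatten_map_mem [[S0 o] [Hp HK]] Ha Hb Qa Qb.
have [i Hi Ei] := In_nth (set0, None) Hp.
case: HQ => [[Ess]|/In_flatten_map [[S1 o1] [Hp' Hs]]].
  subst ss0; exists i => //; rewrite /sec /sub Ei /=.
  case: o Hp HK Ei => [c|] Hp HK Ei /=.
    move: HK => /mapP[K'' HK'' EK]; subst K.
    move: Ha Hb; rewrite !in_setU => /orP[Ha|Ha] /orP[Hb|Hb];
      by rewrite ?Ha ?Hb ?(pc_sub HK'' Ha) ?(pc_sub HK'' Hb) ?orbT.
  by move: HK Ha Hb; rewrite inE => /eqP-> /= Ha Hb; rewrite !in_setU Ha Hb.
case: o1 Hp' Hs => [c'|] Hp' Hs //=.
have [j Hj Ej] := In_nth (set0, None) Hp'.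
have Ta := tv_sub Hs Qa; have Tb := tv_sub Hs Qb.
have nS v : v \in S0 -> v \in tree_verts c' -> False.
  move=> H1 H2; apply: (G2 (h := fun p => ochn p.2) (Hcnt v) _ Hp').
    by rewrite /cnt /=; apply/bigcup_In; exists (S0, o).
  by rewrite /= -tv_count.
case: (eqVneq i j) => [Eij|nij].
  have Epp : (S0, o) = (S1, Some c') by rewrite -Ej -Eij Ei.
  case: Epp => E1 E2; subst S1 o.
  move: HK => /mapP[K'' HK'' EK]; subst K.
  have Hcnt' v : count (cnt v) (nodes c') <= 1.
    exact: leq_trans (count_sub _ (child_In_Q Hp' erefl)) (Hcnt v).
  move: Ha Hb; rewrite !in_setU => /orP[/nS/(_ Ta)//|Ha] /orP[/nS/(_ Tb)//|Hb].
  exact: (IH _ c' Hp' erefl K'' Hcnt' Hs HK'' Ha Hb Qa Qb).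
exfalso.
have Ha' : a \in S0 \/ a \in otree_verts o.
  case: o Hp HK Ei => [c|] Hp HK Ei.
    move: HK => /mapP[K'' HK'' EK]; subst K.
    move: Ha; rewrite in_setU => /orP[]; [by left|by move/(pc_sub HK''); right].
  by move: HK Ha; rewrite inE => /eqP-> ; left.
case: Ha' => [/nS/(_ Ta)//|Ha'].
have Hc3 : count (cnt a) (flatten (map (fun p => ochn p.2) ss0)) <= 1 :=
  leq_trans (leq_addl (cnt a (QNode ss0)) _) (Hcnt a).
apply: (G1 (h := fun p => ochn p.2) (d := (set0, None)) Hc3 nij Hi Hj).
  by rewrite Ei /= -otv_count.
by rewrite Ej /= -tv_count.
Qed.

End Tree.
Lemma two_common (A : Type) (p : pred A) (s : seq A) d :
  1 < count p s -> exists i j, [/\ i < j, j < size s, p (nth d s i) & p (nth d s j)].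
Proof.
elim: s => [|a s IH] //=.
case Ha: (p a) => /=.
  rewrite add1n ltnS -has_count => Hh.
  exists 0, (find p s).+1; split=> //; first by rewrite ltnS -has_find.
  exact: nth_find.
rewrite add0n => /IH [i [j [H1 H2 H3 H4]]].
by exists i.+1, j.+1.
Qed.

Lemma clique_ext (T : finType) (g : rel T) n (K : {set T}) :
  #|T| <= #|K| + n -> is_clique g K -> exists M : {set T}, K \subset M /\ max_clique g M.
Proof.
elim: n K => [|n IH] K Hn HK.
  exists K; split=> //; split=> // K' sub _.
  apply/eqP; rewrite eq_sym eqEcard sub /=.
  by rewrite (leq_trans (max_card _)) // -(addn0 #|K|).
case: (classic (max_clique g K)) => [HM|HM]; first by exists K.
have [K' [sub [HK' ne]]] : exists K' : {set T}, K \subset K' /\ is_clique g K' /\ K' <> K.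
  apply: NNPP => Hn'; apply: HM; split=> // K' sub HK'.
  apply: NNPP => ne; apply: Hn'; exists K'; tauto.
have lt : #|K| < #|K'|.
  apply: proper_card; rewrite properEneq sub andbT; apply/eqP => E; exact: ne.
have Hn2 : #|T| <= #|K'| + n by rewrite (leq_trans Hn) // -addSnnS leq_add2r.
have [M [sM HM']] := IH K' Hn2 HK'.
by exists M; split=> //; exact: subset_trans sub sM.
Qed.

Lemma c4_del (T : finType) (g : rel T) x y a b : interval_graph (del_edge g x y) ->
  g a x -> g x b -> g b y -> g y a -> ~~ g a b -> a != b -> x != y ->
  a != x -> a != y -> b != x -> b != y -> False.
Proof.
move=> Hi gax gxb gby gya nab ab xy ax ay bx byy.
have ya : y != a by rewrite eq_sym.
have xa : x != a by rewrite eq_sym.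
have xb : x != b by rewrite eq_sym.
have yb : y != b by rewrite eq_sym.
apply: (c4_free (h := del_edge g x y) (a := a) (b := b) (x := x) (y := y) Hi) => //;
  rewrite /del_edge ?(negbTE ax) ?(negbTE ay) ?(negbTE bx) ?(negbTE byy) ?(negbTE xy)
          ?(negbTE ya) ?(negbTE xa) ?(negbTE xb) ?(negbTE yb) ?eqxx ?andbF ?andbT //=.
Qed.

Unset Implicit Arguments.
Set Strict Implicit.

Theorem mainTheorem4 (T : finType) (g : rel T) (t : mpq T)
    (ss : seq ({set T} * option (mpq T))) (x y : T) :
  symmetric g -> irreflexive g -> interval_graph g -> MPQ_tree g t ->
  List.In (QNode ss) (nodes t) ->
  x \in node_verts (QNode ss) -> y \in node_verts (QNode ss) ->
  g x y ->
  (1 < count (fun p : {set T} * option (mpq T) => (x \in p.1) && (y \in p.1)) ss \/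
   exists2 i, i < size ss &
     [/\ x \in sec ss i, y \in sec ss i & ~ is_clique g (sub ss i)]) ->
  ~ interval_edge g x y.
Proof.
move=> sym irr _ [Hcount [Huniq Hpc] _ HQok _] HQ Hx Hy gxy Hcase [_ Hint].
have xy : x != y by apply/eqP => E; subst; rewrite irr in gxy.
have Hcnt1 v : count (cnt v) (nodes t) <= 1 by rewrite /cnt Hcount.
have Hne : Qne t.
  by move=> ss' H E; have [k3 _] := HQok ss' H; subst ss'.
have [k3 [Hl [[fa1 fa2] [fb [fcd [fe ff]]]]]] := HQok ss HQ.
have HcQ v : count (cnt v) (nodes (QNode ss)) <= 1 := leq_trans (count_sub _ HQ) (Hcnt1 v).
have secnv j v : j < size ss -> v \in sec ss j -> v \in node_verts (QNode ss).
  move=> Hj Hv; apply/bigcup_In; exists (nth (set0,None) ss j); split => //; exact: nth_In.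
have D1 j v : j < size ss -> v \in node_verts (QNode ss) -> v \in sub ss j -> False.
  move=> Hj H1 H2; apply: (G2 (h := fun p => ochn p.2) (HcQ v) _ (nth_In (set0,None) Hj)).
    by rewrite /cnt /= H1.
  by rewrite -otv_count.
have D2 i j v : i < size ss -> j < size ss -> i != j -> v \in sub ss i -> v \in sub ss j -> False.
  move=> Hi Hj ne H1 H2.
  have Hc3 : count (cnt v) (flatten (map (fun p => ochn p.2) ss)) <= 1 :=
    leq_trans (leq_addl (cnt v (QNode ss)) _) (HcQ v).
  by apply: (G1 (h := fun p => ochn p.2) (d := (set0,None)) Hc3 ne Hi Hj); rewrite -otv_count.
have subtv j v : j < size ss -> v \in sec ss j :|: sub ss j -> v \in tree_verts (QNode ss).
  move=> Hj; rewrite in_setU => /orP[H|H]; first by apply: nv_tv; exact: secnv H.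
  rewrite tv_count nodesQ.
  have H2 : 0 < count (cnt v) (flatten (map (fun p => ochn p.2) ss)).
    apply: (leq_trans _ (count_flatten_le (fun p => ochn p.2) (cnt v) (nth_In (set0,None) Hj))).
    by rewrite -otv_count.
  exact: (leq_trans H2 (leq_addl _ _)).
have contig v p m q : v \in node_verts (QNode ss) -> p <= m -> m <= q -> q < size ss ->
    v \in sec ss p -> v \in sec ss q -> v \in sec ss m.
  move=> Hv h1 h2 h3; have [l [r [_ E]]] := Hl v Hv.
  have h4 : m < size ss := leq_ltn_trans h2 h3.
  have h5 : p < size ss := leq_ltn_trans h1 h4.
  rewrite (E p h5) (E q h3) (E m h4) => /andP[a1 a2] /andP[b1 b2].
  by apply/andP; split; [exact: leq_trans a1 h1 | exact: leq_trans h2 b2].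
have Hadj j u v : j < size ss -> u \in sec ss j -> v \in sec ss j :|: sub ss j -> u != v -> g u v.
  move=> Hj Hu Hv ne.
  suff [K0 [HK0 [Hu0 Hv0]]] : exists K0, K0 \in path_cliques (QNode ss) /\ u \in K0 /\ v \in K0.
    have [K [HK sb]] := pc_lift HQ HK0.
    have [Kc _] := (Hpc K).1 HK.
    by apply: Kc => //; apply: (subsetP sb).
  have Hp := nth_In (set0,None) Hj.
  move: Hu Hv Hp; rewrite /sec /sub; case: (nth (set0,None) ss j) => S0 o /= Hu Hv Hp.
  case: o Hv Hp => [c|] Hv Hp; last first.
    exists S0; split; first exact: (memQ0 Hp erefl).
    by split=> //; move: Hv; rewrite in_setU in_set0 orbF.
  have Hnc : Qne c := Qne_child Hne (nodes_trans HQ (child_In_Q Hp erefl)).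
  move: Hv; rewrite in_setU => /orP[Hv|Hv].
    have [K'' HK''] := pc_ne Hnc.
    exists (S0 :|: K''); split; first exact: (memQ Hp erefl HK'').
    by rewrite !in_setU Hu Hv.
  have [K'' [HK'' HvK]] := pc_cover Hnc Hv.
  exists (S0 :|: K''); split; first exact: (memQ Hp erefl HK'').
  by rewrite !in_setU Hu HvK orbT.
case: Hcase => [Hc|[i Hi [xi yi Hnc]]].
  have [i0 [j0 [ij Hj0 /andP[xi0 yi0] /andP[xj0 yj0]]]] := two_common (set0, None) Hc.
  set i := i0.
  have Hi1 : i.+1 < size ss := leq_ltn_trans ij Hj0.
  have Hi : i < size ss := ltnW Hi1.
  have xi1 : x \in sec ss i.+1 := contig x i0 i0.+1 j0 Hx (leqnSn _) ij Hj0 xi0 xj0.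
  have yi1 : y \in sec ss i.+1 := contig y i0 i0.+1 j0 Hy (leqnSn _) ij Hj0 yi0 yj0.
  have [/set0Pn[a Ha] /set0Pn[b Hb]] := ff i.+1 Hi1.
  move: Ha Hb; rewrite !inE -!/(sec ss i) -!/(sub ss i).
  move=> /= /andP[naS Ha0] /andP[nbS Hb0].
  have Ha1 : a \in sec ss i :|: sub ss i by rewrite in_setU.
  have Hb1 : b \in sec ss i.+1 :|: sub ss i.+1 by rewrite in_setU.
  have Qa := subtv _ _ Hi Ha1; have Qb := subtv _ _ Hi1 Hb1.
  have noK K : K \in path_cliques t -> a \in K -> b \in K -> False.
    move=> HK Ha Hb; have [j Hj /andP[]] := pc_Q Hcnt1 HQ HK Ha Hb Qa Qb.
    rewrite !in_setU => Haj Hbj.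
    case/orP: Ha0 => [aSi|aVi].
      have aN := secnv _ _ Hi aSi.
      have aSj : a \in sec ss j by case/orP: Haj => // /(D1 _ _ Hj aN).
      case/orP: Hb0 => [bS1|bV1].
        have bN := secnv _ _ Hi1 bS1.
        have bSj : b \in sec ss j by case/orP: Hbj => // /(D1 _ _ Hj bN).
        case: (leqP j i) => ji.
          by move: nbS; rewrite (contig b j i i.+1 bN ji (leqnSn _) Hi1 bSj bS1).
        by move: naS; rewrite (contig a i i.+1 j aN (leqnSn _) ji Hj aSi aSj).
      case/orP: Hbj => [bSj|bVj]; first exact: (D1 _ _ Hi1 (secnv _ _ Hj bSj) bV1).
      case: (eqVneq j i.+1) => [Ej|nj]; last exact: (D2 _ _ _ Hj Hi1 nj bVj bV1).
      by subst j; rewrite aSj in naS.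
    case/orP: Haj => [aSj|aVj]; first exact: (D1 _ _ Hi (secnv _ _ Hj aSj) aVi).
    case: (eqVneq j i) => [Ej|nj]; last exact: (D2 _ _ _ Hj Hi nj aVj aVi).
    subst j; case/orP: Hbj => [bSi|bVi]; first by rewrite bSi in nbS.
    case/orP: Hb0 => [bS1|bV1]; first exact: (D1 _ _ Hi (secnv _ _ Hi1 bS1) bVi).
    by apply: (D2 _ _ _ Hi Hi1 _ bVi bV1); rewrite neq_ltn ltnSn.
  have ab : a != b.
    apply/eqP => Eab; subst b.
    have [K [HK HaK]] := pc_cover Hne (tv_sub HQ Qa).
    exact: (noK K HK HaK HaK).
  have nab : ~~ g a b.
    apply/negP => gab.
    have Hcl : is_clique g [set a; b].
      move=> u v; rewrite !inE => /orP[]/eqP-> /orP[]/eqP->; rewrite ?eqxx //.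
      by rewrite sym.
    have [M [sM HM]] := clique_ext (n := #|T|) (leq_addl _ _) Hcl.
    apply: (noK M); first exact/(Hpc M).2.
      by apply: (subsetP sM); rewrite !inE eqxx.
    by apply: (subsetP sM); rewrite !inE eqxx orbT.
  have ax : a != x by apply/eqP => E; subst a; rewrite xi1 in naS.
  have ay : a != y by apply/eqP => E; subst a; rewrite yi1 in naS.
  have bx : b != x by apply/eqP => E; subst b; rewrite xi0 in nbS.
  have byy : b != y by apply/eqP => E; subst b; rewrite yi0 in nbS.
  apply: (c4_del (a := a) (b := b) Hint) => //.
  - by rewrite sym; apply: (Hadj i) => //; rewrite eq_sym.
  - by apply: (Hadj i.+1) => //; rewrite eq_sym.
  - by rewrite sym; apply: (Hadj i.+1) => //; rewrite eq_sym.
  - by apply: (Hadj i) => //; rewrite eq_sym.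
have [u [w [Hu Hw uw nuw]]] :
    exists u w, [/\ u \in sub ss i, w \in sub ss i, u != w & ~~ g u w].
  apply: NNPP => H; apply: Hnc => u w Hu Hw uw; apply: NNPP => nuw; apply: H.
  by exists u, w; split=> //; apply/negP.
have ux : u != x by apply/eqP => E; subst u; exact: (D1 _ _ Hi Hx Hu).
have uy : u != y by apply/eqP => E; subst u; exact: (D1 _ _ Hi Hy Hu).
have wx : w != x by apply/eqP => E; subst w; exact: (D1 _ _ Hi Hx Hw).
have wy : w != y by apply/eqP => E; subst w; exact: (D1 _ _ Hi Hy Hw).
have Hu1 : u \in sec ss i :|: sub ss i by rewrite in_setU Hu orbT.
have Hw1 : w \in sec ss i :|: sub ss i by rewrite in_setU Hw orbT.
apply: (c4_del (a := u) (b := w) Hint) => //.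
- by rewrite sym; apply: (Hadj i) => //; rewrite eq_sym.
- by apply: (Hadj i) => //; rewrite eq_sym.
- by rewrite sym; apply: (Hadj i) => //; rewrite eq_sym.
- by apply: (Hadj i) => //; rewrite eq_sym.
Qed.
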